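(* The equivalence class (under $\sim$) of any upper prime consists entirely of upper primes of the same length, and the equivalence class of any lower prime consists entirely of lower primes of the same length.
   Context: $\mathcal{A}$ is the free associative $\mathbb{C}$-algebra on noncommuting generators $L,R$; words are finite products of these letters. A word is balanced if it contains equally many $L$'s and $R$'s. $\mathcal{J}$ is the two-sided ideal generated by $\{FG-GF : F,G \text{ nonempty balanced words}\}$, and $X\sim Y$ means $X-Y\in\mathcal{J}$. A word is prime if it is nonempty, balanced, and not a product of two nonempty balanced words. For balanced $W=a_1\cdots a_n$, $e_k(W)=\sum_{i=1}^k\overline{a_i}$ with $\overline{R}=1$, $\overline{L}=-1$. A prime $P$ of length $n$ is an upper prime if $e_k(P)>0$ for $1\le k\le n-1$, and a lower prime if $e_k(P)<0$ for $1\le k\le n-1$. *)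

(* Defs.v *)
From HB Require Import structures.
From mathcomp Require Import all_boot all_order all_algebra.
From mathcomp Require Import complex.
From mathcomp Require Import Rstruct.
Set Implicit Arguments. Unset Strict Implicit. Unset Printing Implicit Defensive.
Import Order.TTheory GRing.Theory Num.Theory.

Inductive letter := L | R.

Definition letter_eqb (a b : letter) : bool :=
  match a, b with L, L | R, R => true | _, _ => false end.
Lemma letter_eqP : Equality.axiom letter_eqb.
Proof. by case; case; constructor. Qed.
HB.instance Definition _ := hasDecEq.Build letter letter_eqP.

Definition word := seq letter.

Definition CC := complex Rdefinitions.R.

Definition balanced (W : word) : bool := count_mem L W == count_mem R W.

Definition nonempty_balanced (W : word) : bool := (W != [::]) && balanced W.

Definition prime_word (W : word) : Prop :=
  nonempty_balanced W /\
  ~ (exists U V : word, [/\ nonempty_balanced U, nonempty_balanced V & W = U ++ V]).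

Definition lbar (a : letter) : int := if a is R then 1 else -1.

Definition ek (k : nat) (W : word) : int := \sum_(a <- take k W) lbar a.

Definition upper_prime (P : word) : Prop :=
  prime_word P /\ forall k, (1 <= k <= (size P).-1)%N -> (0 < ek k P)%R.

Definition lower_prime (P : word) : Prop :=
  prime_word P /\ forall k, (1 <= k <= (size P).-1)%N -> (ek k P < 0)%R.

(* Elements of A are represented by their coefficient functions word -> C
   (finitely supported).  A generator datum (c, u, F, G, v) stands for
   c * u (F G - G F) v; the two-sided ideal J generated by the commutators
   [F,G] of nonempty balanced words consists exactly of the finite sums of
   such terms. *)
Definition gen_term (g : CC * word * word * word * word) (w : word) : CC :=
  let: (c, u, F, G, v) := g in
  (c * (((u ++ F ++ G ++ v) == w)%:R - ((u ++ G ++ F ++ v) == w)%:R))%R.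

Definition gen_ok (g : CC * word * word * word * word) : bool :=
  let: (c, u, F, G, v) := g in nonempty_balanced F && nonempty_balanced G.

Definition in_J (f : word -> CC) : Prop :=
  exists gs : seq (CC * word * word * word * word),
    all gen_ok gs /\ forall w, f w = (\sum_(g <- gs) gen_term g w)%R.

Definition sim (X Y : word) : Prop :=
  in_J (fun w => ((X == w)%:R - (Y == w)%:R)%R).

(* Main.v *)
Require Import Defs.
From mathcomp Require Import all_boot all_order all_algebra.
From mathcomp Require Import zify.
From mathcomp Require Import complex Rstruct.
Set Implicit Arguments. Unset Strict Implicit. Unset Printing Implicit Defensive.
Import Order.TTheory GRing.Theory Num.Theory.

Definition Sw (x : word) : int := (\sum_(a <- x) lbar a)%R.

Lemma Sw_count x : Sw x = ((count_mem R x)%:Z - (count_mem L x)%:Z)%R.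
Proof.
rewrite /Sw; elim: x => [|a x IH]; first by rewrite big_nil.
rewrite big_cons IH; case: a => /=; rewrite ?add0n ?add1n; lia.
Qed.

Lemma Sw0 x : balanced x -> Sw x = 0%R.
Proof. by rewrite Sw_count /balanced => /eqP ->; rewrite subrr. Qed.

Lemma Sw_cat x y : Sw (x ++ y) = (Sw x + Sw y)%R.
Proof. by rewrite /Sw big_cat. Qed.

Lemma ek_cat k x y : ek k (x ++ y) = if k < size x then ek k x else (Sw x + ek (k - size x) y)%R.
Proof. by rewrite /ek take_cat; case: ifP => //; rewrite big_cat. Qed.

Lemma ek0 x : ek 0 x = 0%R.
Proof. by rewrite /ek take0 big_nil. Qed.

Lemma nb_size x : nonempty_balanced x -> 0 < size x.
Proof. by case/andP; rewrite lt0n size_eq0. Qed.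

Lemma prime_of_prof (p : int -> bool) W : ~~ p 0%R -> nonempty_balanced W ->
  (forall k, 1 <= k <= (size W).-1 -> p (ek k W)) -> prime_word W.
Proof.
move=> p0 nb hk; split=> //; case=> U [V [hU hV eW]].
have := hk (size U); rewrite eW /ek take_size_cat // -/(Sw U) Sw0; last by case/andP: hU.
move: (nb_size hU) (nb_size hV); rewrite size_cat => a b.
rewrite (negbTE p0) => h; suff: false by []; apply: h; lia.
Qed.

Lemma swap_ek F G v j : balanced F -> balanced G ->
  exists j', ek j (G ++ F ++ v) = ek j' (F ++ G ++ v) /\ (j' <= j \/ j' <= size F + size G).
Proof.
move=> bF bG; have SF := Sw0 bF; have SG := Sw0 bG.
case: (ltnP j (size G)) => hjG.
  exists (size F + j); split; last by right; lia.
  rewrite [LHS]ek_cat hjG [RHS]ek_cat.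
  have -> : (size F + j < size F) = false by lia.
  by rewrite addKn ek_cat hjG SF add0r.
case: (ltnP j (size G + size F)) => hj2.
  exists (j - size G); split; last by left; lia.
  rewrite [LHS]ek_cat [RHS]ek_cat.
  have -> : (j < size G) = false by lia.
  rewrite ek_cat.
  have -> : (j - size G < size F) = true by lia.
  by rewrite SG add0r.
exists j; split; last by left.
rewrite [LHS]ek_cat [RHS]ek_cat.
have -> : (j < size G) = false by lia.
have -> : (j < size F) = false by lia.
rewrite ek_cat ek_cat.
have -> : (j - size G < size F) = false by lia.
have -> : (j - size F < size G) = false by lia.
rewrite SF SG !add0r; congr ek; lia.
Qed.

Definition prof (p : int -> bool) (W : word) : Prop :=
  forall k, 1 <= k <= (size W).-1 -> p (ek k W).

Definition goodb (p : int -> bool) (n : nat) (W : word) : bool :=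
  [&& nonempty_balanced W, size W == n & all (fun k => p (ek k W)) (iota 1 (size W).-1)].

Lemma goodbP p n W : reflect [/\ nonempty_balanced W, size W = n & prof p W] (goodb p n W).
Proof.
apply: (iffP and3P) => [[nb /eqP sz /allP al]|[nb sz pr]]; split=> //.
- move=> k hk; apply: al; rewrite mem_iota; lia.
- by apply/eqP.
- apply/allP => k; rewrite mem_iota => hk; apply: pr; lia.
Qed.

Lemma nb_swap u F G v : nonempty_balanced F ->
  nonempty_balanced (u ++ F ++ G ++ v) = nonempty_balanced (u ++ G ++ F ++ v).
Proof.
move=> /andP[hF _]; rewrite /nonempty_balanced /balanced.
have ne : forall y, (u ++ F ++ y != [::]) by move=> y; rewrite -size_eq0 !size_cat; move: hF; rewrite -size_eq0; lia.
have ne2 : (u ++ G ++ F ++ v != [::]) by rewrite -size_eq0 !size_cat; move: hF; rewrite -size_eq0; lia.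
rewrite ne ne2 /= !count_cat.
by rewrite (addnCA (count_mem L F)) (addnCA (count_mem R F)).
Qed.

Lemma good_swap p n u F G v : ~~ p 0%R -> nonempty_balanced F -> nonempty_balanced G ->
  goodb p n (u ++ F ++ G ++ v) -> goodb p n (u ++ G ++ F ++ v).
Proof.
move=> p0 nF nG /goodbP [nb sz pr].
have szF := nb_size nF; have szG := nb_size nG.
have bF : balanced F by case/andP: nF.
have bG : balanced G by case/andP: nG.
have ssz : size (u ++ G ++ F ++ v) = size (u ++ F ++ G ++ v) by rewrite !size_cat; lia.
have Hb := pr (size u + size F).
have e1 : (size u + size F < size u) = false by lia.
move: Hb; rewrite ek_cat e1 addKn ek_cat ltnn subnn ek0 (Sw0 bF) !addr0 => Hb.
have szuv : 0 < size u /\ 0 < size v.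
  case: (posnP (size u)) => hu.
    move/eqP: hu; rewrite size_eq0 => /eqP hu; subst u.
    move: Hb; rewrite /Sw big_nil (negbTE p0) => h; suff: false by []; apply: h.
    rewrite !size_cat /=; lia.
  case: (posnP (size v)) => hv //.
  move/eqP: hv; rewrite size_eq0 => /eqP hv; subst v.
  have: Sw (u ++ F ++ G ++ [::]) = 0%R by apply: Sw0; case/andP: nb.
  rewrite !Sw_cat (Sw0 bF) (Sw0 bG) /Sw big_nil !add0r addr0 -/(Sw u) => hS.
  move: Hb; rewrite hS (negbTE p0) => h; suff: false by []; apply: h.
  rewrite !size_cat /=; lia.
case: szuv => su sv.
apply/goodbP; split.
- by rewrite -nb_swap.
- by rewrite ssz.
move=> k hk; rewrite ssz in hk.
rewrite ek_cat; case: ifP => hku.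
  have := pr k hk; by rewrite ek_cat hku.
have [j' [-> hj']] := swap_ek v (k - size u) bF bG.
have := pr (size u + j'); rewrite ek_cat.
have -> : (size u + j' < size u) = false by lia.
rewrite addKn; apply.
move: hk hku hj'; rewrite !size_cat; lia.
Qed.

Lemma good_swap_eq p n u F G v : ~~ p 0%R -> nonempty_balanced F -> nonempty_balanced G ->
  goodb p n (u ++ F ++ G ++ v) = goodb p n (u ++ G ++ F ++ v).
Proof. by move=> *; apply/idP/idP; apply: good_swap. Qed.

Lemma sum_eq_mem (t : seq word) a : uniq t ->
  (\sum_(w <- t) ((a == w)%:R : CC))%R = ((a \in t)%:R)%R.
Proof.
elim: t => [|x t IH] /=; first by rewrite big_nil.
case/andP => xt ut; rewrite big_cons IH // in_cons.
case: eqP => [->|_] /=; last by rewrite add0r.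
by rewrite (negbTE xt) addr0.
Qed.

Lemma sim_good (p : int -> bool) n W P : ~~ p 0%R -> sim W P -> goodb p n P -> goodb p n W.
Proof.
move=> p0 [gs [ok heq]] gP; apply/negPn/negP => gW.
pose f (g : CC * word * word * word * word) :=
  let: (c, u, F, G, v) := g in [:: u ++ F ++ G ++ v; u ++ G ++ F ++ v].
pose t := filter (goodb p n) (undup (W :: P :: flatten (map f gs))).
have ut : uniq t by rewrite filter_uniq // undup_uniq.
have E : (\sum_(w <- t) (((W == w)%:R - (P == w)%:R) : CC))%R =
         (\sum_(w <- t) \sum_(g <- gs) gen_term g w)%R.
  by apply: eq_bigr => w _; exact: heq.
rewrite sumrB !sum_eq_mem // exchange_big /= in E.
rewrite big1_seq in E; last first.
  move=> g /andP[_ gin]; move: (allP ok g gin).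
  case: g gin => [[[[c u] F] G] v] gin /= /andP[nF nG].
  rewrite -mulr_sumr sumrB !sum_eq_mem //.
  have inS : forall x, x \in f (c, u, F, G, v) -> x \in t = goodb p n x.
    move=> x hx; rewrite /t mem_filter mem_undup !in_cons.
    have -> : x \in flatten [seq f i | i <- gs] by apply/flatten_mapP; exists (c, u, F, G, v).
    by rewrite !orbT andbT.
  rewrite inS; last by rewrite /= !inE eqxx.
  rewrite inS; last by rewrite /= !inE eqxx orbT.
  by rewrite (good_swap_eq n u v p0 nF nG) subrr mulr0.
move: E; rewrite /t !mem_filter (negbTE gW) gP andFb andTb mem_undup in_cons in_cons eqxx orbT.
by move/eqP; rewrite sub0r oppr_eq0 oner_eq0.
Qed.

Definition ppos (x : int) : bool := (0 < x)%R.
Definition pneg (x : int) : bool := (x < 0)%R.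

Theorem lemma5p6 :
  (forall P W : word, upper_prime P -> sim W P -> upper_prime W /\ size W = size P) /\
  (forall P W : word, lower_prime P -> sim W P -> lower_prime W /\ size W = size P).
Proof.
split=> P W [[nb _] pr] sWP.
- have p0 : ~~ ppos 0%R by [].
  have gP : goodb ppos (size P) P by apply/goodbP.
  case/goodbP: (sim_good p0 sWP gP) => nbW szW prW.
  split=> //; split; [exact: (prime_of_prof p0 nbW prW) | exact: prW].
- have p0 : ~~ pneg 0%R by [].
  have gP : goodb pneg (size P) P by apply/goodbP.
  case/goodbP: (sim_good p0 sWP gP) => nbW szW prW.
  split=> //; split; [exact: (prime_of_prof p0 nbW prW) | exact: prW].
Qed.
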